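(* The following linear maps $\mathcal{W}\to\mathcal{F}_\alpha\otimes\mathcal{F}_\beta$ (for the indicated $(\alpha,\beta)$) are 1-cocycles that are not 1-coboundaries: $\mathrm{d}^1_{0,1}(L_n)=n^2v_0\otimes v_n$ into $\mathcal{F}_0\otimes\mathcal{F}_1$; $\mathrm{d}^1_{1,0}(L_n)=n^2v_n\otimes v_0$ into $\mathcal{F}_1\otimes\mathcal{F}_0$; $\mathrm{d}_{0,2}(L_n)=n^3v_0\otimes v_n$ into $\mathcal{F}_0\otimes\mathcal{F}_2$; $\mathrm{d}_{2,0}(L_n)=n^3v_n\otimes v_0$ into $\mathcal{F}_2\otimes\mathcal{F}_0$; and $\mathrm{d}_{1,1}$ into $\mathcal{F}_1\otimes\mathcal{F}_1$ with $\mathrm{d}_{1,1}(L_n)=\sum_{i=1}^{n}i(n-i)v_i\otimes v_{n-i}$ for $n\ge1$, $\mathrm{d}_{1,1}(L_0)=0$, $\mathrm{d}_{1,1}(L_n)=-\sum_{i=n}^{-1}i(n-i)v_i\otimes v_{n-i}$ for $n\le-1$. Moreover, $\mathrm{d}^1_{0,1}$ and $\mathrm{d}_{0,1}$ are linearly independent, and $\mathrm{d}^1_{1,0}$ and $\mathrm{d}_{1,0}$ are linearly independent, where $\mathrm{d}_{0,1}(L_n)$ and $\mathrm{d}_{1,0}(L_n)$ are given by $\sum_{i=0}^{n-1}(i-n\beta)v_i\otimes v_{n-i}$ for $n\ge1$, $0$ for $n=0$, $-\sum_{i=n}^{-1}(i-n\beta)v_i\otimes v_{n-i}$ for $n\le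 -1$, with $\beta=1$, resp. $\beta=0$.
   Context: The Witt algebra $\mathcal{W}$ has basis $\{L_n\mid n\in\mathbb{Z}\}$ and bracket $[L_m,L_n]=(m-n)L_{m+n}$. $\mathcal{F}_\alpha$ has basis $\{v_n\}$ with $L_m\cdot v_n=-(\alpha m+n)v_{m+n}$; $\mathcal{F}_\alpha\otimes\mathcal{F}_\beta$ is a $\mathcal{W}$-module via $L_m\cdot(v_i\otimes v_j)=-(i+\alpha m)v_{m+i}\otimes v_j-(j+\beta m)v_i\otimes v_{m+j}$. A 1-cocycle is a linear map $d$ with $d([x,y])=x\cdot d(y)-y\cdot d(x)$; a 1-coboundary is a map $x\mapsto x\cdot v$ for a fixed $v$ in the module. *)

(* Defs.v *)
From HB Require Import structures.
From mathcomp Require Import all_boot all_order all_algebra.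
Set Implicit Arguments. Unset Strict Implicit. Unset Printing Implicit Defensive.
Import Order.TTheory GRing.Theory Num.Theory.
Local Open Scope ring_scope.

Section WittModule.
Variable K : fieldType.

(* Elements of F_alpha (x) F_beta are represented by their coefficient
   functions: f i j is the coefficient of v_i (x) v_j.  Genuine elements of
   the tensor product are the finitely supported such functions. *)
Definition tens := int -> int -> K.

Definition finsupp (f : tens) : Prop :=
  exists N : nat, forall i j : int,
    ((N%:Z < `|i|) || (N%:Z < `|j|))%R -> f i j = 0.

Definition tzero : tens := fun _ _ => 0.
Definition tscale (c : K) (f : tens) : tens := fun i j => c * f i j.
Definition tadd (f g : tens) : tens := fun i j => f i j + g i j.

Definition tb (a b : int) : tens :=
  fun i j => if (i == a) && (j == b) then 1 else 0.

(* \sum_{i = a}^{b} F i  (empty if b < a) *)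
Definition tsumZ (a b : int) (F : int -> tens) : tens :=
  fun i j => \sum_(k < absz (b - a + 1)%R | (a <= b)%R) F (a + k%:Z) i j.

(* Action of L_m on F_alpha (x) F_beta:
   L_m.(v_a (x) v_b) = -(a + alpha m) v_{m+a} (x) v_b - (b + beta m) v_a (x) v_{m+b},
   written on coefficients. *)
Definition act (alpha beta : K) (m : int) (f : tens) : tens :=
  fun i j => - ((i - m)%:~R + alpha * m%:~R) * f (i - m) j
             - ((j - m)%:~R + beta * m%:~R) * f i (j - m).

(* A linear map d : W -> F_alpha (x) F_beta is determined by its values
   d n := d(L_n) on the basis {L_n}.  Since the cocycle identity is bilinear,
   it holds for all x, y in W iff it holds on basis elements, where
   [L_m, L_n] = (m - n) L_{m+n}. *)
Definition cocycle (alpha beta : K) (d : int -> tens) : Prop :=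
  (forall n, finsupp (d n)) /\
  forall m n : int,
    tscale (m - n)%:~R (d (m + n))
    = tadd (act alpha beta m (d n)) (tscale (-1) (act alpha beta n (d m))).

Definition coboundary (alpha beta : K) (d : int -> tens) : Prop :=
  exists v : tens, finsupp v /\ forall n, d n = act alpha beta n v.

Definition indep_classes (alpha beta : K) (d1 d2 : int -> tens) : Prop :=
  forall a b : K,
    coboundary alpha beta (fun n => tadd (tscale a (d1 n)) (tscale b (d2 n))) ->
    a = 0 /\ b = 0.

Definition d1_01 (n : int) : tens := tscale (n%:~R ^+ 2) (tb 0 n).
Definition d1_10 (n : int) : tens := tscale (n%:~R ^+ 2) (tb n 0).
Definition d_02 (n : int) : tens := tscale (n%:~R ^+ 3) (tb 0 n).
Definition d_20 (n : int) : tens := tscale (n%:~R ^+ 3) (tb n 0).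

Definition d_11 (n : int) : tens :=
  let F := fun i : int => tscale (i * (n - i))%:~R (tb i (n - i)) in
  if (0 < n)%R then tsumZ 1 n F
  else if n == 0 then tzero
  else tscale (-1) (tsumZ n (-1) F).

(* d_{0,1} (beta = 1) and d_{1,0} (beta = 0) *)
Definition d_beta (beta : K) (n : int) : tens :=
  let F := fun i : int => tscale (i%:~R - n%:~R * beta) (tb i (n - i)) in
  if (0 < n)%R then tsumZ 0 (n - 1) F
  else if n == 0 then tzero
  else tscale (-1) (tsumZ n (-1) F).

End WittModule.

(* Main.v *)
Require Import Defs.
From HB Require Import structures.
From mathcomp Require Import all_boot all_order all_algebra.
From mathcomp Require Import zify ring lra.
From Stdlib Require Import FunctionalExtensionality.
Import GRing.Theory Num.Theory.
Local Open Scope ring_scope.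

Lemma tsumZ_tb (K : fieldType) (a b n : int) (c : int -> K) (i j : int) :
  tsumZ a b (fun x => tscale (c x) (@tb K x (n - x))) i j =
  if (a <= i <= b) && (j == n - i) then c i else 0.
Proof.
rewrite /tsumZ /tscale /tb.
case: (lerP a b) => hab; last first.
  rewrite big_pred0_eq.
  case: ifP => // /andP[/andP[h1 h2] _]; lia.
case hi: (a <= i <= b).
  have hk : (absz (i - a)%R < absz (b - a + 1)%R)%N by lia.
  rewrite (bigD1 (Ordinal hk)) //= big1 ?addr0.
    have -> : a + (absz (i - a))%:Z = i by lia.
    by rewrite eqxx /=; case: (j == n - i); rewrite ?mulr1 ?mulr0.
  move=> k hk'.
  have : i != a + k%:Z.
    apply/eqP => e; move/eqP: hk'; apply; apply/val_inj => /=; lia.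
  by move/negbTE => ->; rewrite mulr0.
rewrite /= big1 // => k _.
have : i != a + k%:Z.
  apply/eqP => e; have := ltn_ord k; lia.
by move/negbTE => ->; rewrite mulr0.
Qed.

Definition H (i j : int) : int := j * `|i| + i * `|j|.

Lemma half2 (K : fieldType) (h2 : (2:K) != 0) (x : int) :
  (2 : K)^-1 * ((2 * x)%:~R) = x%:~R.
Proof. by rewrite intrM mulrA mulVf // mul1r. Qed.

Lemma d11E (K : fieldType) (h2 : (2:K) != 0) n i j :
  @d_11 K n i j = if i + j == n then 2^-1 * (H i j)%:~R else 0.
Proof.
rewrite /d_11 /H; case: (ltrP 0 n) => hn.
  rewrite tsumZ_tb; case: (eqVneq (i + j) n) => e.
    have -> : (j == n - i) = true by apply/eqP; lia.
    case h: (1 <= i <= n) => /=.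
      have -> : j * `|i| + i * `|j| = 2 * (i * (n - i)) by nia.
      by rewrite (@half2 K h2).
    have -> : j * `|i| + i * `|j| = 0 by nia.
    by rewrite mulr0.
  have -> : (j == n - i) = false by apply/eqP; lia.
  by rewrite andbF.
case: eqP => [->|hn0].
  rewrite /tzero; case: (eqVneq (i + j) 0) => // e.
  have -> : j * `|i| + i * `|j| = 0 by nia.
  by rewrite mulr0.
rewrite /tscale tsumZ_tb; case: (eqVneq (i + j) n) => e.
  have -> : (j == n - i) = true by apply/eqP; lia.
  case h: (n <= i <= -1) => /=.
    have -> : j * `|i| + i * `|j| = 2 * (- (i * (n - i))) by nia.
    rewrite (@half2 K h2); rewrite intrN; ring.
  have -> : j * `|i| + i * `|j| = 0 by nia.
  by rewrite !mulr0.
have -> : (j == n - i) = false by apply/eqP; lia.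
by rewrite andbF mulr0.
Qed.

Lemma cocycle_d11 (K : fieldType) (h2 : (2:K) != 0) : cocycle 1 1 (@d_11 K).
Proof.
split.
  move=> n; exists (absz n) => i j hij; rewrite (@d11E K h2).
  case: eqP => // e; rewrite /H.
  have -> : j * `|i| + i * `|j| = 0 by nia.
  by rewrite mulr0.
move=> m n; apply: functional_extensionality => i.
apply: functional_extensionality => j.
rewrite /tscale /tadd /act !(@d11E K h2).
have -> : (i - m + j == n) = (i + j == m + n) by apply/eqP/eqP; lia.
have -> : (i + (j - m) == n) = (i + j == m + n) by apply/eqP/eqP; lia.
have -> : (i - n + j == m) = (i + j == m + n) by apply/eqP/eqP; lia.
have -> : (i + (j - n) == m) = (i + j == m + n) by apply/eqP/eqP; lia.
case: eqP => e; last by ring.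
rewrite /H.
have -> : `|j - m| = `|i - n| by rewrite -normrN; congr `|_|; lia.
have -> : `|j - n| = `|i - m| by rewrite -normrN; congr `|_|; lia.
ring.
Qed.

Lemma tbE (K : fieldType) (c : K) a b i j :
  tscale c (@tb K a b) i j = if (i == a) && (j == b) then c else 0.
Proof. by rewrite /tscale /tb; case: ifP; rewrite ?mulr1 ?mulr0. Qed.

Lemma kill0 (K : fieldType) (x y : int) (b : bool) (c : K) :
  (x%:~R + 0 * y%:~R) * (c * (if (x == 0) && b then 1 else 0)) = 0.
Proof. by case: eqP => [->|] /=; rewrite ?mul0r ?add0r ?mulr0 ?mul0r. Qed.

Lemma cocycle_left (K : fieldType) (beta : K) (p : int -> K) :
  (forall m n : int, (m - n)%:~R * p (m + n) =
     (m%:~R + beta * n%:~R) * p m - (n%:~R + beta * m%:~R) * p n) ->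
  cocycle 0 beta (fun n => tscale (p n) (@tb K 0 n)).
Proof.
move=> hp; split.
  move=> n; exists (absz n) => i j hij; rewrite tbE.
  case: ifP => // /andP[/eqP ei /eqP ej]; lia.
move=> m n; apply: functional_extensionality => i.
apply: functional_extensionality => j.
rewrite /tadd /act /tscale /tb !mulNr !kill0.
have -> : (j - m == n) = (j == m + n) by apply/eqP/eqP; lia.
have -> : (j - n == m) = (j == m + n) by apply/eqP/eqP; lia.
case: (eqVneq j (m + n)) => [->|hj]; last by rewrite !andbF; ring.
rewrite !andbT; case: (i == 0); last by ring.
have -> : m + n - m = n by ring.
have -> : m + n - n = m by ring.
rewrite !mulr1 hp; ring.
Qed.

Lemma kill0' (K : fieldType) (x y : int) (b : bool) (c : K) :
  (x%:~R + 0 * y%:~R) * (c * (if b && (x == 0) then 1 else 0)) = 0.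
Proof. by rewrite andbC kill0. Qed.

Lemma cocycle_right (K : fieldType) (alpha : K) (p : int -> K) :
  (forall m n : int, (m - n)%:~R * p (m + n) =
     (m%:~R + alpha * n%:~R) * p m - (n%:~R + alpha * m%:~R) * p n) ->
  cocycle alpha 0 (fun n => tscale (p n) (@tb K n 0)).
Proof.
move=> hp; split.
  move=> n; exists (absz n) => i j hij; rewrite tbE.
  case: ifP => // /andP[/eqP ei /eqP ej]; lia.
move=> m n; apply: functional_extensionality => i.
apply: functional_extensionality => j.
rewrite /tadd /act /tscale /tb !mulNr !kill0'.
have -> : (i - m == n) = (i == m + n) by apply/eqP/eqP; lia.
have -> : (i - n == m) = (i == m + n) by apply/eqP/eqP; lia.
case: (eqVneq i (m + n)) => [->|hj] /=; last by ring.
case: (j == 0); last by ring.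
have -> : m + n - m = n by ring.
have -> : m + n - n = m by ring.
rewrite !mulr1 hp; ring.
Qed.

Set Implicit Arguments.

Lemma quad_diff (K : fieldType) (a c : K) (N : nat) :
  (forall n : int, N%:Z < n -> a * n%:~R ^+ 2 + n%:~R * c = 0) -> 2 * a = 0.
Proof.
move=> h.
have e1 := h (N%:Z + 1) ltac:(lia).
have e2 := h (N%:Z + 2) ltac:(lia).
have e3 := h (N%:Z + 3) ltac:(lia).
have E : 2 * a = (a * (N%:Z + 1)%:~R ^+ 2 + (N%:Z + 1)%:~R * c)
   - 2 * (a * (N%:Z + 2)%:~R ^+ 2 + (N%:Z + 2)%:~R * c)
   + (a * (N%:Z + 3)%:~R ^+ 2 + (N%:Z + 3)%:~R * c) by ring.
by rewrite E e1 e2 e3; ring.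
Qed.

Lemma cub_diff (K : fieldType) (c : K) (N : nat) :
  (forall n : int, N%:Z < n -> n%:~R ^+ 3 + n%:~R * c = 0) -> (6 : K) = 0.
Proof.
move=> h.
have e0 := h (N%:Z + 1) ltac:(lia).
have e1 := h (N%:Z + 2) ltac:(lia).
have e2 := h (N%:Z + 3) ltac:(lia).
have e3 := h (N%:Z + 4) ltac:(lia).
have E : (6 : K) = - ((N%:Z + 1)%:~R ^+ 3 + (N%:Z + 1)%:~R * c)
   + 3 * ((N%:Z + 2)%:~R ^+ 3 + (N%:Z + 2)%:~R * c)
   - 3 * ((N%:Z + 3)%:~R ^+ 3 + (N%:Z + 3)%:~R * c)
   + ((N%:Z + 4)%:~R ^+ 3 + (N%:Z + 4)%:~R * c) by ring.
by rewrite E e0 e1 e2 e3; ring.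
Qed.

Lemma supp0 (K : fieldType) (v : tens K) (N : nat) :
  (forall i j : int, (N%:Z < `|i|) || (N%:Z < `|j|) -> v i j = 0) ->
  forall i j : int, (N%:Z < `|i|) \/ (N%:Z < `|j|) -> v i j = 0.
Proof. by move=> h i j [] hh; apply: h; rewrite hh ?orbT. Qed.

Lemma evalE (K : fieldType) (d : int -> tens K) (f : int -> tens K) :
  (forall n, d n = f n) -> forall n i j, d n i j = f n i j.
Proof. by move=> h n i j; rewrite h. Qed.

Lemma nocob_01 (K : fieldType) (hc : has_pchar0 K) : ~ coboundary 0 1 (@d1_01 K).
Proof.
move=> [v [[N hN] hv]].
have hN' := @supp0 K v N hN.
have h2 : (2 : K) != 0 by rewrite ((pcharf0P K).1 hc 2).
have : (2 : K) * 1 = 0; last by rewrite mulr1 => /eqP; rewrite (negbTE h2).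
apply: (@quad_diff K 1 (v 0 0) N) => n hn; have := @evalE K _ _ hv n 0 n.
rewrite /d1_01 /act tbE !eqxx /= subrr (hN' (0 - n) n) ?mulr0; last by left; lia.
move=> ->; ring.
Qed.

Lemma nocob_10 (K : fieldType) (hc : has_pchar0 K) : ~ coboundary 1 0 (@d1_10 K).
Proof.
move=> [v [[N hN] hv]].
have hN' := @supp0 K v N hN.
have h2 : (2 : K) != 0 by rewrite ((pcharf0P K).1 hc 2).
have : (2 : K) * 1 = 0; last by rewrite mulr1 => /eqP; rewrite (negbTE h2).
apply: (@quad_diff K 1 (v 0 0) N) => n hn.
have := @evalE K _ _ hv n n 0.
rewrite /d1_10 /act tbE !eqxx /= subrr (hN' n (0 - n)) ?mulr0; last by left; lia.
move=> ->; ring.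
Qed.

Lemma nocob_02 (K : fieldType) (hc : has_pchar0 K) : ~ coboundary 0 (1 + 1) (@d_02 K).
Proof.
move=> [v [[N hN] hv]].
have hN' := @supp0 K v N hN.
have h6 : (6 : K) != 0 by rewrite ((pcharf0P K).1 hc 6).
move/eqP: h6; apply; apply: (@cub_diff K (2 * v 0 0) N) => n hn.
have := @evalE K _ _ hv n 0 n.
rewrite /d_02 /act tbE !eqxx /= subrr (hN' (0 - n) n) ?mulr0; last by left; lia.
move=> ->; ring.
Qed.

Lemma nocob_20 (K : fieldType) (hc : has_pchar0 K) : ~ coboundary (1 + 1) 0 (@d_20 K).
Proof.
move=> [v [[N hN] hv]].
have hN' := @supp0 K v N hN.
have h6 : (6 : K) != 0 by rewrite ((pcharf0P K).1 hc 6).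
move/eqP: h6; apply; apply: (@cub_diff K (2 * v 0 0) N) => n hn.
have := @evalE K _ _ hv n n 0.
rewrite /d_20 /act tbE !eqxx /= subrr (hN' n (0 - n)) ?mulr0; last by right; lia.
move=> ->; ring.
Qed.

Lemma nocob_11 (K : fieldType) (hc : has_pchar0 K) : ~ coboundary 1 1 (@d_11 K).
Proof.
move=> [v [[N hN] hv]].
have hN' := @supp0 K v N hN.
have h2 : (2 : K) != 0 by rewrite ((pcharf0P K).1 hc 2).
have hM : (N.+1 * N.+1)%N%:R != 0 :> K by rewrite ((pcharf0P K).1 hc).
have := @evalE K _ _ hv (2 * N.+1%:Z) N.+1 N.+1.
rewrite (@d11E K h2) /act.
have -> : (N.+1%:Z + N.+1%:Z == 2 * N.+1%:Z) = true by apply/eqP; lia.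
rewrite (hN' (N.+1%:Z - 2 * N.+1%:Z) N.+1); last by left; lia.
rewrite (hN' N.+1 (N.+1%:Z - 2 * N.+1%:Z)); last by right; lia.
have -> : H N.+1 N.+1 = 2 * (N.+1 * N.+1)%N%:Z by rewrite /H; lia.
rewrite (@half2 K h2) !mulr0 subr0 => /eqP.
by rewrite (negbTE hM).
Qed.

Lemma d_betaE (K : fieldType) (beta : K) n i j : 0 < n ->
  d_beta beta n i j =
  if (0 <= i <= n - 1) && (j == n - i) then i%:~R - n%:~R * beta else 0.
Proof. by move=> hn; rewrite /d_beta hn tsumZ_tb. Qed.

Lemma indep_01 (K : fieldType) (hc : has_pchar0 K) :
  indep_classes 0 1 (@d1_01 K) (d_beta 1).
Proof.
move=> a b [v [[N hN] hv]].
have hN' := @supp0 K v N hN.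
have h2 : (2 : K) != 0 by rewrite ((pcharf0P K).1 hc 2).
have hM : (N.+1)%:R != 0 :> K by rewrite ((pcharf0P K).1 hc).
have hb : b = 0.
  have := @evalE K _ _ hv (2 * N.+1%:Z) N.+1 N.+1.
  have hp : 0 < 2 * N.+1%:Z by lia.
  rewrite /tadd /tscale /d1_01 /act /tb (@d_betaE K _ _ _ _ hp) /tscale.
  have -> : (N.+1%:Z == 0) = false by apply/eqP; lia.
  have -> : (0 <= N.+1%:Z <= 2 * N.+1%:Z - 1) && (N.+1%:Z == 2 * N.+1%:Z - N.+1%:Z) = true.
    by apply/andP; split; [apply/andP; split|apply/eqP]; lia.
  rewrite (hN' (N.+1%:Z - 2 * N.+1%:Z) N.+1); last by left; lia.
  rewrite (hN' N.+1 (N.+1%:Z - 2 * N.+1%:Z)); last by right; lia.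
  rewrite /=.
  have -> : (N.+1%:Z)%:~R - (2 * N.+1%:Z)%:~R * 1 = - (N.+1%:R : K).
    rewrite mulr1 intrM.
    change ((N.+1%:~R : K) - 2%:~R * N.+1%:~R = - N.+1%:~R).
    set x := (N.+1%:~R : K).
    have -> : ((2:int)%:~R : K) = 1 + 1 by [].
    by rewrite mulrDl mul1r opprD addrA subrr add0r.
  move/eqP; rewrite !mulr0 subr0 add0r mulrN oppr_eq0 mulf_eq0 (negbTE hM) orbF.
  by move/eqP.
split => //.
have : (2 : K) * a = 0; last by move/eqP; rewrite mulf_eq0 (negbTE h2) /= => /eqP.
apply: (@quad_diff K a (v 0 0) N) => n hn.
have := @evalE K _ _ hv n 0 n.
rewrite /tadd /tscale hb mul0r addr0 /d1_01 /act /tscale /tb !eqxx /= subrr.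
rewrite (hN' (0 - n) n) ?mulr0; last by left; lia.
rewrite mulr1 => ->; ring.
Qed.

Lemma indep_10 (K : fieldType) (hc : has_pchar0 K) :
  indep_classes 1 0 (@d1_10 K) (d_beta 0).
Proof.
move=> a b [v [[N hN] hv]].
have hN' := @supp0 K v N hN.
have h2 : (2 : K) != 0 by rewrite ((pcharf0P K).1 hc 2).
have hM : (N.+1)%:R != 0 :> K by rewrite ((pcharf0P K).1 hc).
have hb : b = 0.
  have := @evalE K _ _ hv (2 * N.+1%:Z) N.+1 N.+1.
  have hp : 0 < 2 * N.+1%:Z by lia.
  rewrite /tadd /tscale /d1_10 /act /tb (@d_betaE K _ _ _ _ hp) /tscale.
  have -> : (N.+1%:Z == 2 * N.+1%:Z) = false by apply/eqP; lia.
  have -> : (0 <= N.+1%:Z <= 2 * N.+1%:Z - 1) && (N.+1%:Z == 2 * N.+1%:Z - N.+1%:Z) = true.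
    by apply/andP; split; [apply/andP; split|apply/eqP]; lia.
  rewrite (hN' (N.+1%:Z - 2 * N.+1%:Z) N.+1); last by left; lia.
  rewrite (hN' N.+1 (N.+1%:Z - 2 * N.+1%:Z)); last by right; lia.
  rewrite /= !mulr0 !subr0 add0r.
  move/eqP; rewrite mulf_eq0 (negbTE hM) orbF.
  by move/eqP.
split => //.
have : (2 : K) * a = 0; last by move/eqP; rewrite mulf_eq0 (negbTE h2) /= => /eqP.
apply: (@quad_diff K a (v 0 0) N) => n hn.
have := @evalE K _ _ hv n n 0.
rewrite /tadd /tscale hb mul0r addr0 /d1_10 /act /tscale /tb !eqxx /= subrr.
rewrite (hN' n (0 - n)) ?mulr0; last by right; lia.
rewrite mulr1 => ->; ring.
Qed.

Unset Implicit Arguments.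

Theorem propositionP3p1 (K : fieldType) (char0 : [pchar K] =i pred0) :
  (cocycle 0 1 (@d1_01 K) /\ ~ coboundary 0 1 (@d1_01 K)) /\
  (cocycle 1 0 (@d1_10 K) /\ ~ coboundary 1 0 (@d1_10 K)) /\
  (cocycle 0 (1 + 1) (@d_02 K) /\ ~ coboundary 0 (1 + 1) (@d_02 K)) /\
  (cocycle (1 + 1) 0 (@d_20 K) /\ ~ coboundary (1 + 1) 0 (@d_20 K)) /\
  (cocycle 1 1 (@d_11 K) /\ ~ coboundary 1 1 (@d_11 K)) /\
  indep_classes 0 1 (@d1_01 K) (d_beta 1) /\
  indep_classes 1 0 (@d1_10 K) (d_beta 0).
Proof.
have hc : has_pchar0 K := char0.
have h2 : (2 : K) != 0 by rewrite ((pcharf0P K).1 hc 2).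
split; [split|split; [split|split; [split|split; [split|split; [split|split]]]]].
- apply: (@cocycle_left K 1 (fun n => n%:~R ^+ 2)) => m n; ring.
- exact: nocob_01.
- apply: (@cocycle_right K 1 (fun n => n%:~R ^+ 2)) => m n; ring.
- exact: nocob_10.
- apply: (@cocycle_left K (1 + 1) (fun n => n%:~R ^+ 3)) => m n; ring.
- exact: nocob_02.
- apply: (@cocycle_right K (1 + 1) (fun n => n%:~R ^+ 3)) => m n; ring.
- exact: nocob_20.
- exact: cocycle_d11.
- exact: nocob_11.
- exact: indep_01.
- exact: indep_10.
Qed.
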